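(* Let $M$ be a $k\times k$ matrix (for some $k\ge1$) with all entries positive integers such that $M^2=5M$. Then, up to conjugation by a permutation matrix, $M$ is one of the following: $N_1=(5)$, $N_2=\begin{pmatrix}4&1\\4&1\end{pmatrix}$, $N_3=\begin{pmatrix}4&4\\1&1\end{pmatrix}$, $N_4=\begin{pmatrix}4&2\\2&1\end{pmatrix}$, $N_5=\begin{pmatrix}3&6\\1&2\end{pmatrix}$, $N_6=\begin{pmatrix}3&3\\2&2\end{pmatrix}$, $N_7=\begin{pmatrix}3&2\\3&2\end{pmatrix}$, $N_8=\begin{pmatrix}3&1\\6&2\end{pmatrix}$, $N_9=\begin{pmatrix}3&1&1\\3&1&1\\3&1&1\end{pmatrix}$, $N_{10}=\begin{pmatrix}3&3&3\\1&1&1\\1&1&1\end{pmatrix}$, $N_{11}=\begin{pmatrix}2&2&2\\2&2&2\\1&1&1\end{pmatrix}$, $N_{12}=\begin{pmatrix}2&4&2\\1&2&1\\1&2&1\end{pmatrix}$, $N_{13}=\begin{pmatrix}2&2&1\\2&2&1\\2&2&1\end{pmatrix}$, $N_{14}$ = the $5\times5$ all-ones matrix, $N_{15}=\begin{pmatrix}2&1&1&1\\2&1&1&1\\2&1&1&1\\2&1&1&1\end{pmatrix}$, $N_{16}=\begin{pmatrix}2&2&2&2\\1&1&1&1\\1&1&1&1\\1&1&1&1\end{pmatrix}$.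
   Context: Conjugation by a permutation matrix means replacing $M$ by $PMP^{-1}$ for a permutation matrix $P$ (simultaneous permutation of rows and columns). *)

(* Defs.v *)
From HB Require Import structures.
From mathcomp Require Import all_boot all_order all_algebra all_fingroup.
Set Implicit Arguments. Unset Strict Implicit. Unset Printing Implicit Defensive.
Import GRing.Theory Num.Theory.
Local Open Scope ring_scope.

Definition N_list : seq (seq (seq int)) :=
  [:: [:: [:: 5]];
      [:: [:: 4; 1]; [:: 4; 1]];
      [:: [:: 4; 4]; [:: 1; 1]];
      [:: [:: 4; 2]; [:: 2; 1]];
      [:: [:: 3; 6]; [:: 1; 2]];
      [:: [:: 3; 3]; [:: 2; 2]];
      [:: [:: 3; 2]; [:: 3; 2]];
      [:: [:: 3; 1]; [:: 6; 2]];
      [:: [:: 3; 1; 1]; [:: 3; 1; 1]; [:: 3; 1; 1]];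
      [:: [:: 3; 3; 3]; [:: 1; 1; 1]; [:: 1; 1; 1]];
      [:: [:: 2; 2; 2]; [:: 2; 2; 2]; [:: 1; 1; 1]];
      [:: [:: 2; 4; 2]; [:: 1; 2; 1]; [:: 1; 2; 1]];
      [:: [:: 2; 2; 1]; [:: 2; 2; 1]; [:: 2; 2; 1]];
      nseq 5 (nseq 5 1);
      nseq 4 [:: 2; 1; 1; 1];
      [:: [:: 2; 2; 2; 2]; [:: 1; 1; 1; 1];
          [:: 1; 1; 1; 1]; [:: 1; 1; 1; 1]]
  ].

Definition mx_is (k : nat) (A : 'M[int]_k) (N : seq (seq int)) : Prop :=
  size N = k /\ forall i j : 'I_k, A i j = nth 0 (nth [::] N i) j.

(* Main.v *)
Require Import Defs.
From HB Require Import structures.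
From mathcomp Require Import all_boot all_order all_algebra all_fingroup.
From mathcomp Require Import zify ring lra.
Import Order.TTheory GRing.Theory Num.Theory.
Local Open Scope ring_scope.

Lemma conj_entry k (s : 'S_k) (M : 'M[int]_k) i j :
  (perm_mx s *m M *m invmx (perm_mx s)) i j = M (s i) (s j).
Proof.
have -> : invmx (perm_mx s) = perm_mx s^-1 :> 'M[int]_k.
  have U : (perm_mx s : 'M[int]_k) \in unitmx by exact: (unitmx_perm int s).
  rewrite -[invmx _]mul1mx -(perm_mx1 int k) -(mulVg s) perm_mxM -mulmxA.
  by rewrite mulmxV // mulmx1.
by rewrite -row_permE -col_permE !mxE.
Qed.

Section G.
Variable k : nat.
Variable M : 'M[int]_k.
Hypothesis Mpos : forall i j, 0 < M i j.
Hypothesis M2 : M *m M = 5 *: M.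

Lemma Msq i j : \sum_l M i l * M l j = 5 * M i j.
Proof. by have := congr1 (fun A : 'M[int]_k => A i j) M2; rewrite /= !mxE. Qed.

Lemma col_prop j j' l : M l j * M l j' = M l j * M l j'.
Proof. by []. Qed.

Lemma rank1_col j j' : forall a b, M a j * M b j' = M b j * M a j'.
Proof.
move=> a b.
pose F (m : 'I_k) : rat := (M m j)%:~R / (M m j')%:~R.
have [m _ Hm] := @real_arg_minP _ _ a predT F (isT : predT a) (fun i _ => num_real _).
have pos' x y : 0 < (M x y)%:~R :> rat by rewrite ltr0z.
have Hz : forall i, M m j * M i j' <= M i j * M m j'.
  move=> i; have := Hm i isT; rewrite /F ler_pdivrMr // mulrAC ler_pdivlMr //.
  by rewrite -!intrM ler_int.
have Z : \sum_l M m l * (M l j * M m j' - M m j * M l j') = 0.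
  transitivity (M m j' * (\sum_l M m l * M l j) - M m j * (\sum_l M m l * M l j')).
    rewrite !mulr_sumr -sumrB; apply: eq_bigr => l _; ring.
  by rewrite !Msq; ring.
have Z2 : forall l, M m l * (M l j * M m j' - M m j * M l j') = 0.
  move=> l; apply: (psumr_eq0P _ Z) => // i _.
  have := Hz i; have := Mpos m i; nia.
have Ea := Z2 a; have Eb := Z2 b.
have Pa := Mpos m a; have Pb := Mpos m b; have Pm := Mpos m j'.
have {}Ea : M a j * M m j' = M m j * M a j'.
  apply/eqP; rewrite -subr_eq0; apply/eqP.
  by move: Ea => /eqP; rewrite mulf_eq0 gt_eqF //= => /eqP.
have {}Eb : M b j * M m j' = M m j * M b j'.
  apply/eqP; rewrite -subr_eq0; apply/eqP.
  by move: Eb => /eqP; rewrite mulf_eq0 gt_eqF //= => /eqP.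
have NZ : M m j' != 0 by rewrite gt_eqF.
apply: (mulIf NZ).
transitivity (M a j * M m j' * M b j'); first ring.
rewrite Ea.
transitivity (M m j * (M b j' * M a j')); first ring.
transitivity (M b j * M m j' * M a j'); last ring.
by rewrite Eb; ring.
Qed.
End G.

Lemma trace5 k (M : 'M[int]_k) : (forall i j, 0 < M i j) -> M *m M = 5 *: M ->
  forall i0 : 'I_k, \sum_l M l l = 5.
Proof.
move=> Mpos M2 i0.
have NZ : M i0 i0 != 0 by rewrite gt_eqF.
apply: (mulIf NZ).
rewrite mulr_suml -(@Msq k M M2).
by apply: eq_bigr => l _; rewrite (@rank1_col k M Mpos M2 l i0 l i0) mulrC.
Qed.

Lemma kle5 k (M : 'M[int]_k) : (forall i j, 0 < M i j) -> M *m M = 5 *: M ->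
  (0 < k)%N -> (k <= 5)%N.
Proof.
move=> Mpos M2 k0.
have T := @trace5 k M Mpos M2 (Ordinal k0).
have : \sum_(l < k) (1 : int) <= \sum_l M l l by apply: ler_sum => l _; exact: Mpos.
by rewrite T sumr_const card_ord -[(5 : int)]/(5%:R) ler_nat.
Qed.

Definition rowsM n (M : 'M[int]_n.+1) : seq (seq int) :=
  [seq [seq M (inord i) (inord j) | j <- iota 0 n.+1] | i <- iota 0 n.+1].

Arguments rowsM {n}.

Definition goodT k (t : seq (seq int) * (seq nat * seq (seq int))) : bool :=
  let: (L, (p, N)) := t in
  [&& perm_eq p (iota 0 k), N \in N_list, size N == k &
     all (fun i => all (fun j => nth 0 (nth [::] L (nth 0%N p i)) (nth 0%N p j)
        == nth 0 (nth [::] N i) j) (iota 0 k)) (iota 0 k)].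

Lemma rowsME n (M : 'M[int]_n.+1) a b : (a < n.+1)%N -> (b < n.+1)%N ->
  nth 0 (nth [::] (rowsM M) a) b = M (inord a) (inord b).
Proof.
move=> Ha Hb.
by rewrite /rowsM (nth_map 0%N) ?size_iota // (nth_map 0%N) ?size_iota // !nth_iota.
Qed.

Lemma leafR n (M : 'M[int]_n.+1) T : all (goodT n.+1) T -> rowsM M \in map fst T ->
  exists s : 'S_n.+1,
    exists2 N, N \in N_list &
      mx_is (perm_mx s *m M *m invmx (perm_mx s)) N.
Proof.
move=> /allP AT /mapP [[L [p N]] Hin EL].
have := AT _ Hin; rewrite /goodT; cbv beta iota; case/and4P => pp NN sN Hall.
simpl in EL; subst L.
have pbound i : (nth 0%N p i < n.+1)%N.
  case: (ltnP i (size p)) => Hi; last by rewrite nth_default.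
  by have := mem_nth 0%N Hi; rewrite (perm_mem pp) mem_iota.

have up : uniq p by rewrite (perm_uniq pp) iota_uniq.
have sp : size p = n.+1 by rewrite (perm_size pp) size_iota.
pose f (i : 'I_n.+1) : 'I_n.+1 := inord (nth 0%N p i).
have finj : injective f.
  move=> i j /(congr1 val); rewrite /f /= !inordK // => E.
  by apply/val_inj/eqP; rewrite -(nth_uniq 0%N _ _ up) ?sp ?ltn_ord // E.
exists (perm finj); exists N => //.
split; first by apply/eqP.
move=> i j; rewrite conj_entry !permE /f.
have Hi : (nat_of_ord i \in iota 0 n.+1) by rewrite mem_iota /=.
have Hj : (nat_of_ord j \in iota 0 n.+1) by rewrite mem_iota /=.
have /allP H1 := allP Hall _ Hi.
by have /eqP <- := H1 _ Hj; rewrite rowsME.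
Qed.

Definition xM n (M : 'M[int]_n.+1) (i j : nat) : int := M (inord i) (inord j).
Arguments xM {n}.

Lemma xfacts n (M : 'M[int]_n.+1) : (forall i j, 0 < M i j) -> M *m M = 5 *: M ->
  (forall i j, 0 < xM M i j) /\
  (forall a j b j', xM M a j * xM M b j' = xM M b j * xM M a j') /\
  \sum_(0 <= i < n.+1) xM M i i = 5.
Proof.
move=> Mpos M2; split; first by move=> i j; exact: Mpos.
split; first by move=> a j b j'; exact: (@rank1_col _ M Mpos M2).
rewrite big_mkord -(@trace5 _ M Mpos M2 ord0).
by apply: eq_bigr => i _; rewrite /xM inord_val.
Qed.

Lemma offb (a b c d : int) : 0 < a -> 0 < b -> 0 < c -> 0 < d -> a * b = c * d -> c + d <= 5 -> a <= 6.
Proof. move=> *; nia. Qed.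

Lemma offb2 (a b c d : int) : 0 < a -> 0 < b -> 0 < c -> 0 < d -> b * a = c * d -> c + d <= 5 -> a <= 6.
Proof. move=> *; nia. Qed.

Ltac prune := match goal with
 | h : ?a = ?b |- _ => let t := eval vm_compute in (a == b) in
     match t with false => exfalso; move/eqP: h; vm_compute; done end
 end.
Lemma split1 (x : int) : 0 < x -> x <= 1 -> x = 1.
Proof. move=> *; lia. Qed.
Ltac sp1 x hp hb := let e := fresh "e" in pose proof (@split1 _ hp hb) as e; subst x; try prune.
Lemma split2 (x : int) : 0 < x -> x <= 2 -> x = 1 \/ x = 2.
Proof. move=> *; lia. Qed.
Ltac sp2 x hp hb := let e := fresh "e" in destruct (@split2 _ hp hb) as [e|e]; subst x; try prune.
Lemma split3 (x : int) : 0 < x -> x <= 3 -> x = 1 \/ x = 2 \/ x = 3.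
Proof. move=> *; lia. Qed.
Ltac sp3 x hp hb := let e := fresh "e" in destruct (@split3 _ hp hb) as [e|[e|e]]; subst x; try prune.
Lemma split4 (x : int) : 0 < x -> x <= 4 -> x = 1 \/ x = 2 \/ x = 3 \/ x = 4.
Proof. move=> *; lia. Qed.
Ltac sp4 x hp hb := let e := fresh "e" in destruct (@split4 _ hp hb) as [e|[e|[e|e]]]; subst x; try prune.
Lemma split5 (x : int) : 0 < x -> x <= 5 -> x = 1 \/ x = 2 \/ x = 3 \/ x = 4 \/ x = 5.
Proof. move=> *; lia. Qed.
Ltac sp5 x hp hb := let e := fresh "e" in destruct (@split5 _ hp hb) as [e|[e|[e|[e|e]]]]; subst x; try prune.
Lemma split6 (x : int) : 0 < x -> x <= 6 -> x = 1 \/ x = 2 \/ x = 3 \/ x = 4 \/ x = 5 \/ x = 6.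
Proof. move=> *; lia. Qed.
Ltac sp6 x hp hb := let e := fresh "e" in destruct (@split6 _ hp hb) as [e|[e|[e|[e|[e|e]]]]]; subst x; try prune.

Definition Table1 : seq (seq (seq int) * (seq nat * seq (seq int))) :=
  [:: ([:: [:: 5]], ([:: 0%N], [:: [:: 5]]))].

Lemma pure1 (x0_0 : int) :
  0 < x0_0 ->
  x0_0 = 5 ->
  [:: [:: x0_0]] \in map fst Table1.
Proof.
move=> p0_0 hs.
have b0_0 : x0_0 <= 5 by lia.
sp5 x0_0 p0_0 b0_0.
all: by vm_compute.
Qed.

Definition Table2 : seq (seq (seq int) * (seq nat * seq (seq int))) :=
  [:: ([:: [:: 1; 1]; [:: 4; 4]], ([:: 1%N; 0%N], [:: [:: 4; 4]; [:: 1; 1]]));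
     ([:: [:: 1; 2]; [:: 2; 4]], ([:: 1%N; 0%N], [:: [:: 4; 2]; [:: 2; 1]]));
     ([:: [:: 1; 4]; [:: 1; 4]], ([:: 1%N; 0%N], [:: [:: 4; 1]; [:: 4; 1]]));
     ([:: [:: 2; 1]; [:: 6; 3]], ([:: 1%N; 0%N], [:: [:: 3; 6]; [:: 1; 2]]));
     ([:: [:: 2; 2]; [:: 3; 3]], ([:: 1%N; 0%N], [:: [:: 3; 3]; [:: 2; 2]]));
     ([:: [:: 2; 3]; [:: 2; 3]], ([:: 1%N; 0%N], [:: [:: 3; 2]; [:: 3; 2]]));
     ([:: [:: 2; 6]; [:: 1; 3]], ([:: 1%N; 0%N], [:: [:: 3; 1]; [:: 6; 2]]));
     ([:: [:: 3; 1]; [:: 6; 2]], ([:: 0%N; 1%N], [:: [:: 3; 1]; [:: 6; 2]]));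
     ([:: [:: 3; 2]; [:: 3; 2]], ([:: 0%N; 1%N], [:: [:: 3; 2]; [:: 3; 2]]));
     ([:: [:: 3; 3]; [:: 2; 2]], ([:: 0%N; 1%N], [:: [:: 3; 3]; [:: 2; 2]]));
     ([:: [:: 3; 6]; [:: 1; 2]], ([:: 0%N; 1%N], [:: [:: 3; 6]; [:: 1; 2]]));
     ([:: [:: 4; 1]; [:: 4; 1]], ([:: 0%N; 1%N], [:: [:: 4; 1]; [:: 4; 1]]));
     ([:: [:: 4; 2]; [:: 2; 1]], ([:: 0%N; 1%N], [:: [:: 4; 2]; [:: 2; 1]]));
     ([:: [:: 4; 4]; [:: 1; 1]], ([:: 0%N; 1%N], [:: [:: 4; 4]; [:: 1; 1]]))].

Lemma pure2 (x0_0 x0_1 x1_0 x1_1 : int) :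
  0 < x0_0 ->
  0 < x0_1 ->
  0 < x1_0 ->
  0 < x1_1 ->
  x0_1 * x1_0 = x1_1 * x0_0 ->
  x0_0 + x1_1 = 5 ->
  [:: [:: x0_0; x0_1]; [:: x1_0; x1_1]] \in map fst Table2.
Proof.
move=> p0_0 p0_1 p1_0 p1_1 q0_1_1_0 hs.
have b0_0 : x0_0 <= 4 by lia.
have b1_1 : x1_1 <= 4 by lia.
have b0_1 : x0_1 <= 6 by apply: (@offb _ _ _ _ p0_1 p1_0 p1_1 p0_0 q0_1_1_0); lia.
have b1_0 : x1_0 <= 6 by apply: (@offb2 _ _ _ _ p1_0 p0_1 p1_1 p0_0 q0_1_1_0); lia.
sp4 x0_0 p0_0 b0_0; sp4 x1_1 p1_1 b1_1; sp6 x0_1 p0_1 b0_1; sp6 x1_0 p1_0 b1_0.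
all: by vm_compute.
Qed.

Definition Table3 : seq (seq (seq int) * (seq nat * seq (seq int))) :=
  [:: ([:: [:: 1; 1; 1]; [:: 1; 1; 1]; [:: 3; 3; 3]], ([:: 2%N; 0%N; 1%N], [:: [:: 3; 3; 3]; [:: 1; 1; 1]; [:: 1; 1; 1]]));
     ([:: [:: 1; 1; 3]; [:: 1; 1; 3]; [:: 1; 1; 3]], ([:: 2%N; 0%N; 1%N], [:: [:: 3; 1; 1]; [:: 3; 1; 1]; [:: 3; 1; 1]]));
     ([:: [:: 1; 1; 1]; [:: 2; 2; 2]; [:: 2; 2; 2]], ([:: 1%N; 2%N; 0%N], [:: [:: 2; 2; 2]; [:: 2; 2; 2]; [:: 1; 1; 1]]));
     ([:: [:: 1; 1; 2]; [:: 2; 2; 4]; [:: 1; 1; 2]], ([:: 1%N; 2%N; 0%N], [:: [:: 2; 4; 2]; [:: 1; 2; 1]; [:: 1; 2; 1]]));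
     ([:: [:: 1; 2; 1]; [:: 1; 2; 1]; [:: 2; 4; 2]], ([:: 2%N; 1%N; 0%N], [:: [:: 2; 4; 2]; [:: 1; 2; 1]; [:: 1; 2; 1]]));
     ([:: [:: 1; 2; 2]; [:: 1; 2; 2]; [:: 1; 2; 2]], ([:: 1%N; 2%N; 0%N], [:: [:: 2; 2; 1]; [:: 2; 2; 1]; [:: 2; 2; 1]]));
     ([:: [:: 1; 1; 1]; [:: 3; 3; 3]; [:: 1; 1; 1]], ([:: 1%N; 0%N; 2%N], [:: [:: 3; 3; 3]; [:: 1; 1; 1]; [:: 1; 1; 1]]));
     ([:: [:: 1; 3; 1]; [:: 1; 3; 1]; [:: 1; 3; 1]], ([:: 1%N; 0%N; 2%N], [:: [:: 3; 1; 1]; [:: 3; 1; 1]; [:: 3; 1; 1]]));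
     ([:: [:: 2; 1; 1]; [:: 2; 1; 1]; [:: 4; 2; 2]], ([:: 2%N; 0%N; 1%N], [:: [:: 2; 4; 2]; [:: 1; 2; 1]; [:: 1; 2; 1]]));
     ([:: [:: 2; 1; 2]; [:: 2; 1; 2]; [:: 2; 1; 2]], ([:: 0%N; 2%N; 1%N], [:: [:: 2; 2; 1]; [:: 2; 2; 1]; [:: 2; 2; 1]]));
     ([:: [:: 2; 2; 2]; [:: 1; 1; 1]; [:: 2; 2; 2]], ([:: 0%N; 2%N; 1%N], [:: [:: 2; 2; 2]; [:: 2; 2; 2]; [:: 1; 1; 1]]));
     ([:: [:: 2; 2; 4]; [:: 1; 1; 2]; [:: 1; 1; 2]], ([:: 0%N; 2%N; 1%N], [:: [:: 2; 4; 2]; [:: 1; 2; 1]; [:: 1; 2; 1]]));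
     ([:: [:: 2; 1; 1]; [:: 4; 2; 2]; [:: 2; 1; 1]], ([:: 1%N; 0%N; 2%N], [:: [:: 2; 4; 2]; [:: 1; 2; 1]; [:: 1; 2; 1]]));
     ([:: [:: 2; 2; 1]; [:: 2; 2; 1]; [:: 2; 2; 1]], ([:: 0%N; 1%N; 2%N], [:: [:: 2; 2; 1]; [:: 2; 2; 1]; [:: 2; 2; 1]]));
     ([:: [:: 2; 2; 2]; [:: 2; 2; 2]; [:: 1; 1; 1]], ([:: 0%N; 1%N; 2%N], [:: [:: 2; 2; 2]; [:: 2; 2; 2]; [:: 1; 1; 1]]));
     ([:: [:: 2; 4; 2]; [:: 1; 2; 1]; [:: 1; 2; 1]], ([:: 0%N; 1%N; 2%N], [:: [:: 2; 4; 2]; [:: 1; 2; 1]; [:: 1; 2; 1]]));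
     ([:: [:: 3; 1; 1]; [:: 3; 1; 1]; [:: 3; 1; 1]], ([:: 0%N; 1%N; 2%N], [:: [:: 3; 1; 1]; [:: 3; 1; 1]; [:: 3; 1; 1]]));
     ([:: [:: 3; 3; 3]; [:: 1; 1; 1]; [:: 1; 1; 1]], ([:: 0%N; 1%N; 2%N], [:: [:: 3; 3; 3]; [:: 1; 1; 1]; [:: 1; 1; 1]]))].

Lemma pure3 (x0_0 x0_1 x0_2 x1_0 x1_1 x1_2 x2_0 x2_1 x2_2 : int) :
  0 < x0_0 ->
  0 < x0_1 ->
  0 < x0_2 ->
  0 < x1_0 ->
  0 < x1_1 ->
  0 < x1_2 ->
  0 < x2_0 ->
  0 < x2_1 ->
  0 < x2_2 ->
  x0_1 * x1_0 = x1_1 * x0_0 ->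
  x0_2 * x2_0 = x2_2 * x0_0 ->
  x1_2 * x2_1 = x2_2 * x1_1 ->
  x1_2 * x0_0 = x0_2 * x1_0 ->
  x2_1 * x0_0 = x0_1 * x2_0 ->
  x0_0 + x1_1 + x2_2 = 5 ->
  [:: [:: x0_0; x0_1; x0_2]; [:: x1_0; x1_1; x1_2]; [:: x2_0; x2_1; x2_2]] \in map fst Table3.
Proof.
move=> p0_0 p0_1 p0_2 p1_0 p1_1 p1_2 p2_0 p2_1 p2_2 q0_1_1_0 q0_2_2_0 q1_2_2_1 q1_2_0_0 q2_1_0_0 hs.
have b0_0 : x0_0 <= 3 by lia.
have b1_1 : x1_1 <= 3 by lia.
have b2_2 : x2_2 <= 3 by lia.
have b0_1 : x0_1 <= 6 by apply: (@offb _ _ _ _ p0_1 p1_0 p1_1 p0_0 q0_1_1_0); lia.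
have b1_0 : x1_0 <= 6 by apply: (@offb2 _ _ _ _ p1_0 p0_1 p1_1 p0_0 q0_1_1_0); lia.
have b0_2 : x0_2 <= 6 by apply: (@offb _ _ _ _ p0_2 p2_0 p2_2 p0_0 q0_2_2_0); lia.
have b2_0 : x2_0 <= 6 by apply: (@offb2 _ _ _ _ p2_0 p0_2 p2_2 p0_0 q0_2_2_0); lia.
have b1_2 : x1_2 <= 6 by apply: (@offb _ _ _ _ p1_2 p2_1 p2_2 p1_1 q1_2_2_1); lia.
have b2_1 : x2_1 <= 6 by apply: (@offb2 _ _ _ _ p2_1 p1_2 p2_2 p1_1 q1_2_2_1); lia.
sp3 x0_0 p0_0 b0_0; sp3 x1_1 p1_1 b1_1; sp3 x2_2 p2_2 b2_2; sp6 x0_1 p0_1 b0_1; sp6 x1_0 p1_0 b1_0; sp6 x0_2 p0_2 b0_2; sp6 x2_0 p2_0 b2_0; sp6 x1_2 p1_2 b1_2; sp6 x2_1 p2_1 b2_1.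
all: by vm_compute.
Qed.

Definition Table4 : seq (seq (seq int) * (seq nat * seq (seq int))) :=
  [:: ([:: [:: 1; 1; 1; 1]; [:: 1; 1; 1; 1]; [:: 1; 1; 1; 1]; [:: 2; 2; 2; 2]], ([:: 3%N; 0%N; 1%N; 2%N], [:: [:: 2; 2; 2; 2]; [:: 1; 1; 1; 1]; [:: 1; 1; 1; 1]; [:: 1; 1; 1; 1]]));
     ([:: [:: 1; 1; 1; 2]; [:: 1; 1; 1; 2]; [:: 1; 1; 1; 2]; [:: 1; 1; 1; 2]], ([:: 3%N; 0%N; 1%N; 2%N], [:: [:: 2; 1; 1; 1]; [:: 2; 1; 1; 1]; [:: 2; 1; 1; 1]; [:: 2; 1; 1; 1]]));
     ([:: [:: 1; 1; 1; 1]; [:: 1; 1; 1; 1]; [:: 2; 2; 2; 2]; [:: 1; 1; 1; 1]], ([:: 2%N; 0%N; 1%N; 3%N], [:: [:: 2; 2; 2; 2]; [:: 1; 1; 1; 1]; [:: 1; 1; 1; 1]; [:: 1; 1; 1; 1]]));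
     ([:: [:: 1; 1; 2; 1]; [:: 1; 1; 2; 1]; [:: 1; 1; 2; 1]; [:: 1; 1; 2; 1]], ([:: 2%N; 0%N; 1%N; 3%N], [:: [:: 2; 1; 1; 1]; [:: 2; 1; 1; 1]; [:: 2; 1; 1; 1]; [:: 2; 1; 1; 1]]));
     ([:: [:: 1; 1; 1; 1]; [:: 2; 2; 2; 2]; [:: 1; 1; 1; 1]; [:: 1; 1; 1; 1]], ([:: 1%N; 0%N; 2%N; 3%N], [:: [:: 2; 2; 2; 2]; [:: 1; 1; 1; 1]; [:: 1; 1; 1; 1]; [:: 1; 1; 1; 1]]));
     ([:: [:: 1; 2; 1; 1]; [:: 1; 2; 1; 1]; [:: 1; 2; 1; 1]; [:: 1; 2; 1; 1]], ([:: 1%N; 0%N; 2%N; 3%N], [:: [:: 2; 1; 1; 1]; [:: 2; 1; 1; 1]; [:: 2; 1; 1; 1]; [:: 2; 1; 1; 1]]));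
     ([:: [:: 2; 1; 1; 1]; [:: 2; 1; 1; 1]; [:: 2; 1; 1; 1]; [:: 2; 1; 1; 1]], ([:: 0%N; 1%N; 2%N; 3%N], [:: [:: 2; 1; 1; 1]; [:: 2; 1; 1; 1]; [:: 2; 1; 1; 1]; [:: 2; 1; 1; 1]]));
     ([:: [:: 2; 2; 2; 2]; [:: 1; 1; 1; 1]; [:: 1; 1; 1; 1]; [:: 1; 1; 1; 1]], ([:: 0%N; 1%N; 2%N; 3%N], [:: [:: 2; 2; 2; 2]; [:: 1; 1; 1; 1]; [:: 1; 1; 1; 1]; [:: 1; 1; 1; 1]]))].

Lemma pure4 (x0_0 x0_1 x0_2 x0_3 x1_0 x1_1 x1_2 x1_3 x2_0 x2_1 x2_2 x2_3 x3_0 x3_1 x3_2 x3_3 : int) :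
  0 < x0_0 ->
  0 < x0_1 ->
  0 < x0_2 ->
  0 < x0_3 ->
  0 < x1_0 ->
  0 < x1_1 ->
  0 < x1_2 ->
  0 < x1_3 ->
  0 < x2_0 ->
  0 < x2_1 ->
  0 < x2_2 ->
  0 < x2_3 ->
  0 < x3_0 ->
  0 < x3_1 ->
  0 < x3_2 ->
  0 < x3_3 ->
  x0_1 * x1_0 = x1_1 * x0_0 ->
  x0_2 * x2_0 = x2_2 * x0_0 ->
  x0_3 * x3_0 = x3_3 * x0_0 ->
  x1_2 * x2_1 = x2_2 * x1_1 ->
  x1_3 * x3_1 = x3_3 * x1_1 ->
  x2_3 * x3_2 = x3_3 * x2_2 ->
  x1_2 * x0_0 = x0_2 * x1_0 ->
  x1_3 * x0_0 = x0_3 * x1_0 ->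
  x2_1 * x0_0 = x0_1 * x2_0 ->
  x2_3 * x0_0 = x0_3 * x2_0 ->
  x3_1 * x0_0 = x0_1 * x3_0 ->
  x3_2 * x0_0 = x0_2 * x3_0 ->
  x0_0 + x1_1 + x2_2 + x3_3 = 5 ->
  [:: [:: x0_0; x0_1; x0_2; x0_3]; [:: x1_0; x1_1; x1_2; x1_3]; [:: x2_0; x2_1; x2_2; x2_3]; [:: x3_0; x3_1; x3_2; x3_3]] \in map fst Table4.
Proof.
move=> p0_0 p0_1 p0_2 p0_3 p1_0 p1_1 p1_2 p1_3 p2_0 p2_1 p2_2 p2_3 p3_0 p3_1 p3_2 p3_3 q0_1_1_0 q0_2_2_0 q0_3_3_0 q1_2_2_1 q1_3_3_1 q2_3_3_2 q1_2_0_0 q1_3_0_0 q2_1_0_0 q2_3_0_0 q3_1_0_0 q3_2_0_0 hs.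
have b0_0 : x0_0 <= 2 by lia.
have b1_1 : x1_1 <= 2 by lia.
have b2_2 : x2_2 <= 2 by lia.
have b3_3 : x3_3 <= 2 by lia.
have b0_1 : x0_1 <= 6 by apply: (@offb _ _ _ _ p0_1 p1_0 p1_1 p0_0 q0_1_1_0); lia.
have b1_0 : x1_0 <= 6 by apply: (@offb2 _ _ _ _ p1_0 p0_1 p1_1 p0_0 q0_1_1_0); lia.
have b0_2 : x0_2 <= 6 by apply: (@offb _ _ _ _ p0_2 p2_0 p2_2 p0_0 q0_2_2_0); lia.
have b2_0 : x2_0 <= 6 by apply: (@offb2 _ _ _ _ p2_0 p0_2 p2_2 p0_0 q0_2_2_0); lia.
have b0_3 : x0_3 <= 6 by apply: (@offb _ _ _ _ p0_3 p3_0 p3_3 p0_0 q0_3_3_0); lia.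
have b3_0 : x3_0 <= 6 by apply: (@offb2 _ _ _ _ p3_0 p0_3 p3_3 p0_0 q0_3_3_0); lia.
have b1_2 : x1_2 <= 6 by apply: (@offb _ _ _ _ p1_2 p2_1 p2_2 p1_1 q1_2_2_1); lia.
have b2_1 : x2_1 <= 6 by apply: (@offb2 _ _ _ _ p2_1 p1_2 p2_2 p1_1 q1_2_2_1); lia.
have b1_3 : x1_3 <= 6 by apply: (@offb _ _ _ _ p1_3 p3_1 p3_3 p1_1 q1_3_3_1); lia.
have b3_1 : x3_1 <= 6 by apply: (@offb2 _ _ _ _ p3_1 p1_3 p3_3 p1_1 q1_3_3_1); lia.
have b2_3 : x2_3 <= 6 by apply: (@offb _ _ _ _ p2_3 p3_2 p3_3 p2_2 q2_3_3_2); lia.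
have b3_2 : x3_2 <= 6 by apply: (@offb2 _ _ _ _ p3_2 p2_3 p3_3 p2_2 q2_3_3_2); lia.
sp2 x0_0 p0_0 b0_0; sp2 x1_1 p1_1 b1_1; sp2 x2_2 p2_2 b2_2; sp2 x3_3 p3_3 b3_3; sp6 x0_1 p0_1 b0_1; sp6 x1_0 p1_0 b1_0; sp6 x0_2 p0_2 b0_2; sp6 x2_0 p2_0 b2_0; sp6 x0_3 p0_3 b0_3; sp6 x3_0 p3_0 b3_0; sp6 x1_2 p1_2 b1_2; sp6 x1_3 p1_3 b1_3; sp6 x2_1 p2_1 b2_1; sp6 x2_3 p2_3 b2_3; sp6 x3_1 p3_1 b3_1; sp6 x3_2 p3_2 b3_2.
all: by vm_compute.
Qed.

Definition Table5 : seq (seq (seq int) * (seq nat * seq (seq int))) :=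
  [:: ([:: [:: 1; 1; 1; 1; 1]; [:: 1; 1; 1; 1; 1]; [:: 1; 1; 1; 1; 1]; [:: 1; 1; 1; 1; 1]; [:: 1; 1; 1; 1; 1]], ([:: 0%N; 1%N; 2%N; 3%N; 4%N], [:: [:: 1; 1; 1; 1; 1]; [:: 1; 1; 1; 1; 1]; [:: 1; 1; 1; 1; 1]; [:: 1; 1; 1; 1; 1]; [:: 1; 1; 1; 1; 1]]))].

Lemma pure5 (x0_0 x0_1 x0_2 x0_3 x0_4 x1_0 x1_1 x1_2 x1_3 x1_4 x2_0 x2_1 x2_2 x2_3 x2_4 x3_0 x3_1 x3_2 x3_3 x3_4 x4_0 x4_1 x4_2 x4_3 x4_4 : int) :
  0 < x0_0 ->
  0 < x0_1 ->
  0 < x0_2 ->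
  0 < x0_3 ->
  0 < x0_4 ->
  0 < x1_0 ->
  0 < x1_1 ->
  0 < x1_2 ->
  0 < x1_3 ->
  0 < x1_4 ->
  0 < x2_0 ->
  0 < x2_1 ->
  0 < x2_2 ->
  0 < x2_3 ->
  0 < x2_4 ->
  0 < x3_0 ->
  0 < x3_1 ->
  0 < x3_2 ->
  0 < x3_3 ->
  0 < x3_4 ->
  0 < x4_0 ->
  0 < x4_1 ->
  0 < x4_2 ->
  0 < x4_3 ->
  0 < x4_4 ->
  x0_1 * x1_0 = x1_1 * x0_0 ->
  x0_2 * x2_0 = x2_2 * x0_0 ->
  x0_3 * x3_0 = x3_3 * x0_0 ->
  x0_4 * x4_0 = x4_4 * x0_0 ->
  x1_2 * x2_1 = x2_2 * x1_1 ->
  x1_3 * x3_1 = x3_3 * x1_1 ->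
  x1_4 * x4_1 = x4_4 * x1_1 ->
  x2_3 * x3_2 = x3_3 * x2_2 ->
  x2_4 * x4_2 = x4_4 * x2_2 ->
  x3_4 * x4_3 = x4_4 * x3_3 ->
  x1_2 * x0_0 = x0_2 * x1_0 ->
  x1_3 * x0_0 = x0_3 * x1_0 ->
  x1_4 * x0_0 = x0_4 * x1_0 ->
  x2_1 * x0_0 = x0_1 * x2_0 ->
  x2_3 * x0_0 = x0_3 * x2_0 ->
  x2_4 * x0_0 = x0_4 * x2_0 ->
  x3_1 * x0_0 = x0_1 * x3_0 ->
  x3_2 * x0_0 = x0_2 * x3_0 ->
  x3_4 * x0_0 = x0_4 * x3_0 ->
  x4_1 * x0_0 = x0_1 * x4_0 ->
  x4_2 * x0_0 = x0_2 * x4_0 ->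
  x4_3 * x0_0 = x0_3 * x4_0 ->
  x0_0 + x1_1 + x2_2 + x3_3 + x4_4 = 5 ->
  [:: [:: x0_0; x0_1; x0_2; x0_3; x0_4]; [:: x1_0; x1_1; x1_2; x1_3; x1_4]; [:: x2_0; x2_1; x2_2; x2_3; x2_4]; [:: x3_0; x3_1; x3_2; x3_3; x3_4]; [:: x4_0; x4_1; x4_2; x4_3; x4_4]] \in map fst Table5.
Proof.
move=> p0_0 p0_1 p0_2 p0_3 p0_4 p1_0 p1_1 p1_2 p1_3 p1_4 p2_0 p2_1 p2_2 p2_3 p2_4 p3_0 p3_1 p3_2 p3_3 p3_4 p4_0 p4_1 p4_2 p4_3 p4_4 q0_1_1_0 q0_2_2_0 q0_3_3_0 q0_4_4_0 q1_2_2_1 q1_3_3_1 q1_4_4_1 q2_3_3_2 q2_4_4_2 q3_4_4_3 q1_2_0_0 q1_3_0_0 q1_4_0_0 q2_1_0_0 q2_3_0_0 q2_4_0_0 q3_1_0_0 q3_2_0_0 q3_4_0_0 q4_1_0_0 q4_2_0_0 q4_3_0_0 hs.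
have b0_0 : x0_0 <= 1 by lia.
have b1_1 : x1_1 <= 1 by lia.
have b2_2 : x2_2 <= 1 by lia.
have b3_3 : x3_3 <= 1 by lia.
have b4_4 : x4_4 <= 1 by lia.
have b0_1 : x0_1 <= 6 by apply: (@offb _ _ _ _ p0_1 p1_0 p1_1 p0_0 q0_1_1_0); lia.
have b1_0 : x1_0 <= 6 by apply: (@offb2 _ _ _ _ p1_0 p0_1 p1_1 p0_0 q0_1_1_0); lia.
have b0_2 : x0_2 <= 6 by apply: (@offb _ _ _ _ p0_2 p2_0 p2_2 p0_0 q0_2_2_0); lia.
have b2_0 : x2_0 <= 6 by apply: (@offb2 _ _ _ _ p2_0 p0_2 p2_2 p0_0 q0_2_2_0); lia.
have b0_3 : x0_3 <= 6 by apply: (@offb _ _ _ _ p0_3 p3_0 p3_3 p0_0 q0_3_3_0); lia.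
have b3_0 : x3_0 <= 6 by apply: (@offb2 _ _ _ _ p3_0 p0_3 p3_3 p0_0 q0_3_3_0); lia.
have b0_4 : x0_4 <= 6 by apply: (@offb _ _ _ _ p0_4 p4_0 p4_4 p0_0 q0_4_4_0); lia.
have b4_0 : x4_0 <= 6 by apply: (@offb2 _ _ _ _ p4_0 p0_4 p4_4 p0_0 q0_4_4_0); lia.
have b1_2 : x1_2 <= 6 by apply: (@offb _ _ _ _ p1_2 p2_1 p2_2 p1_1 q1_2_2_1); lia.
have b2_1 : x2_1 <= 6 by apply: (@offb2 _ _ _ _ p2_1 p1_2 p2_2 p1_1 q1_2_2_1); lia.
have b1_3 : x1_3 <= 6 by apply: (@offb _ _ _ _ p1_3 p3_1 p3_3 p1_1 q1_3_3_1); lia.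
have b3_1 : x3_1 <= 6 by apply: (@offb2 _ _ _ _ p3_1 p1_3 p3_3 p1_1 q1_3_3_1); lia.
have b1_4 : x1_4 <= 6 by apply: (@offb _ _ _ _ p1_4 p4_1 p4_4 p1_1 q1_4_4_1); lia.
have b4_1 : x4_1 <= 6 by apply: (@offb2 _ _ _ _ p4_1 p1_4 p4_4 p1_1 q1_4_4_1); lia.
have b2_3 : x2_3 <= 6 by apply: (@offb _ _ _ _ p2_3 p3_2 p3_3 p2_2 q2_3_3_2); lia.
have b3_2 : x3_2 <= 6 by apply: (@offb2 _ _ _ _ p3_2 p2_3 p3_3 p2_2 q2_3_3_2); lia.
have b2_4 : x2_4 <= 6 by apply: (@offb _ _ _ _ p2_4 p4_2 p4_4 p2_2 q2_4_4_2); lia.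
have b4_2 : x4_2 <= 6 by apply: (@offb2 _ _ _ _ p4_2 p2_4 p4_4 p2_2 q2_4_4_2); lia.
have b3_4 : x3_4 <= 6 by apply: (@offb _ _ _ _ p3_4 p4_3 p4_4 p3_3 q3_4_4_3); lia.
have b4_3 : x4_3 <= 6 by apply: (@offb2 _ _ _ _ p4_3 p3_4 p4_4 p3_3 q3_4_4_3); lia.
sp1 x0_0 p0_0 b0_0; sp1 x1_1 p1_1 b1_1; sp1 x2_2 p2_2 b2_2; sp1 x3_3 p3_3 b3_3; sp1 x4_4 p4_4 b4_4; sp6 x0_1 p0_1 b0_1; sp6 x1_0 p1_0 b1_0; sp6 x0_2 p0_2 b0_2; sp6 x2_0 p2_0 b2_0; sp6 x0_3 p0_3 b0_3; sp6 x3_0 p3_0 b3_0; sp6 x0_4 p0_4 b0_4; sp6 x4_0 p4_0 b4_0; sp6 x1_2 p1_2 b1_2; sp6 x1_3 p1_3 b1_3; sp6 x1_4 p1_4 b1_4; sp6 x2_1 p2_1 b2_1; sp6 x2_3 p2_3 b2_3; sp6 x2_4 p2_4 b2_4; sp6 x3_1 p3_1 b3_1; sp6 x3_2 p3_2 b3_2; sp6 x3_4 p3_4 b3_4; sp6 x4_1 p4_1 b4_1; sp6 x4_2 p4_2 b4_2; sp6 x4_3 p4_3 b4_3.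
all: by vm_compute.
Qed.


Theorem mainTheorem10 (k : nat) (M : 'M[int]_k) :
  (0 < k)%N ->
  (forall i j : 'I_k, 0 < M i j) ->
  M *m M = 5 *: M ->
  exists s : 'S_k,
    exists2 N, N \in N_list &
      mx_is (perm_mx s *m M *m invmx (perm_mx s)) N.
Proof.
move=> k0 Mpos M2; have k5 := @kle5 k M Mpos M2 k0.
case: k M Mpos M2 k0 k5 => [|[|[|[|[|[|k]]]]]] // M Mpos M2 _ _.
- have [P [R Tr]] := @xfacts _ M Mpos M2.
  apply: (@leafR _ M Table1); first by vm_compute.
  exact: (@pure1 (xM M 0 0) (P 0 0) ltac:(move: Tr; do 1 (rewrite big_ltn //); rewrite big_geq //; lia)).
- have [P [R Tr]] := @xfacts _ M Mpos M2.
  apply: (@leafR _ M Table2); first by vm_compute.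
  exact: (@pure2 (xM M 0 0) (xM M 0 1) (xM M 1 0) (xM M 1 1) (P 0 0) (P 0 1) (P 1 0) (P 1 1) (R 0 1 1 0) ltac:(move: Tr; do 2 (rewrite big_ltn //); rewrite big_geq //; lia)).
- have [P [R Tr]] := @xfacts _ M Mpos M2.
  apply: (@leafR _ M Table3); first by vm_compute.
  exact: (@pure3 (xM M 0 0) (xM M 0 1) (xM M 0 2) (xM M 1 0) (xM M 1 1) (xM M 1 2) (xM M 2 0) (xM M 2 1) (xM M 2 2) (P 0 0) (P 0 1) (P 0 2) (P 1 0) (P 1 1) (P 1 2) (P 2 0) (P 2 1) (P 2 2) (R 0 1 1 0) (R 0 2 2 0) (R 1 2 2 1) (R 1 2 0 0) (R 2 1 0 0) ltac:(move: Tr; do 3 (rewrite big_ltn //); rewrite big_geq //; lia)).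
- have [P [R Tr]] := @xfacts _ M Mpos M2.
  apply: (@leafR _ M Table4); first by vm_compute.
  exact: (@pure4 (xM M 0 0) (xM M 0 1) (xM M 0 2) (xM M 0 3) (xM M 1 0) (xM M 1 1) (xM M 1 2) (xM M 1 3) (xM M 2 0) (xM M 2 1) (xM M 2 2) (xM M 2 3) (xM M 3 0) (xM M 3 1) (xM M 3 2) (xM M 3 3) (P 0 0) (P 0 1) (P 0 2) (P 0 3) (P 1 0) (P 1 1) (P 1 2) (P 1 3) (P 2 0) (P 2 1) (P 2 2) (P 2 3) (P 3 0) (P 3 1) (P 3 2) (P 3 3) (R 0 1 1 0) (R 0 2 2 0) (R 0 3 3 0) (R 1 2 2 1) (R 1 3 3 1) (R 2 3 3 2) (R 1 2 0 0) (R 1 3 0 0) (R 2 1 0 0) (R 2 3 0 0) (R 3 1 0 0) (R 3 2 0 0) ltac:(move: Tr; do 4 (rewrite big_ltn //); rewrite big_geq //; lia)).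
- have [P [R Tr]] := @xfacts _ M Mpos M2.
  apply: (@leafR _ M Table5); first by vm_compute.
  exact: (@pure5 (xM M 0 0) (xM M 0 1) (xM M 0 2) (xM M 0 3) (xM M 0 4) (xM M 1 0) (xM M 1 1) (xM M 1 2) (xM M 1 3) (xM M 1 4) (xM M 2 0) (xM M 2 1) (xM M 2 2) (xM M 2 3) (xM M 2 4) (xM M 3 0) (xM M 3 1) (xM M 3 2) (xM M 3 3) (xM M 3 4) (xM M 4 0) (xM M 4 1) (xM M 4 2) (xM M 4 3) (xM M 4 4) (P 0 0) (P 0 1) (P 0 2) (P 0 3) (P 0 4) (P 1 0) (P 1 1) (P 1 2) (P 1 3) (P 1 4) (P 2 0) (P 2 1) (P 2 2) (P 2 3) (P 2 4) (P 3 0) (P 3 1) (P 3 2) (P 3 3) (P 3 4) (P 4 0) (P 4 1) (P 4 2) (P 4 3) (P 4 4) (R 0 1 1 0) (R 0 2 2 0) (R 0 3 3 0) (R 0 4 4 0) (R 1 2 2 1) (R 1 3 3 1) (R 1 4 4 1) (R 2 3 3 2) (R 2 4 4 2) (R 3 4 4 3) (R 1 2 0 0) (R 1 3 0 0) (R 1 4 0 0) (R 2 1 0 0) (R 2 3 0 0) (R 2 4 0 0) (R 3 1 0 0) (R 3 2 0 0) (R 3 4 0 0) (R 4 1 0 0) (R 4 2 0 0) (R 4 3 0 0) ltac:(move: Tr; do 5 (rewrite big_ltn //); rewrite big_geq //; lia)).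
Qed.
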